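(* Fix a policy $\pi$ with information set $\mathcal{I}$ in a finite-horizon POMDP $\mathcal{M}$ with $S$ states and $O$ observations, and let beliefs be computed as described in the context. For each state trajectory $\tau_{\mathcal{S}}$ with $p^\pi(\tau_{\mathcal{S}})>0$ define $$\mathbb{P}(\mathcal{T}_{\mathcal{O}}\mid\tau_{\mathcal{S}})=\sum_{\tau_{\mathcal{O}}:\,H(d(\tau_{\mathcal{O}}))\ge H(d(\tau_{\mathcal{S}}))}p^\pi(\tau_{\mathcal{O}}\mid\tau_{\mathcal{S}}),\qquad J^{\mathcal{O}}(\pi\mid\tau_{\mathcal{S}})=\mathbb{E}_{\tau_{\mathcal{O}}\sim p^\pi(\cdot\mid\tau_{\mathcal{S}})}[H(d(\tau_{\mathcal{O}}))],$$ $$\bar p_{\mathcal{S}}(\tau_{\mathcal{S}})=\mathbb{E}_{\tau_{\mathcal{B}}\sim p^\pi(\cdot\mid\tau_{\mathcal{S}})}\Big[\sum_{\tau_{\tilde{\mathcal{S}}}:\,H(d(\tau_{\tilde{\mathcal{S}}}))\ge H(d(\tau_{\mathcal{S}}))}\ \prod_{t=1}^T\bm{b}_t(\tilde s_t)\Big],\qquad \tilde J(\pi\mid\tau_{\mathcal{S}})=\mathbb{E}_{\tau_{\mathcal{B}}\sim p^\pi(\cdot\mid\tau_{\mathcal{S}})}\mathbb{E}_{\tau_{\tilde{\mathcal{S}}}\sim p(\cdot\mid\tau_{\mathcal{B}})}[H(d(\tau_{\tilde{\mathcal{S}}}))].$$ Assume $0<\mathbb{P}(\mathcal{T}_{\mathcal{O}}\mid\tau_{\mathcal{S}})<1$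 and $0<\bar p_{\mathcal{S}}(\tau_{\mathcal{S}})<1$ for all such $\tau_{\mathcal{S}}$. Then, with $J^{\mathcal{S}}(\pi)=\mathbb{E}_{\tau_{\mathcal{S}}\sim p^\pi}[H(d(\tau_{\mathcal{S}}))]$, $$\mathbb{E}_{\tau_{\mathcal{S}}\sim p^\pi}\Big[\frac{J^{\mathcal{O}}(\pi\mid\tau_{\mathcal{S}})-\mathbb{P}(\mathcal{T}_{\mathcal{O}}\mid\tau_{\mathcal{S}})\log O}{1-\mathbb{P}(\mathcal{T}_{\mathcal{O}}\mid\tau_{\mathcal{S}})}\Big]\le J^{\mathcal{S}}(\pi)\le\mathbb{E}_{\tau_{\mathcal{S}}\sim p^\pi}\Big[\frac{J^{\mathcal{O}}(\pi\mid\tau_{\mathcal{S}})}{\mathbb{P}(\mathcal{T}_{\mathcal{O}}\mid\tau_{\mathcal{S}})}\Big],$$ and $$\mathbb{E}_{\tau_{\mathcal{S}}\sim p^\pi}\Big[\frac{\tilde J(\pi\mid\tau_{\mathcal{S}})-\bar p_{\mathcal{S}}(\tau_{\mathcal{S}})\log S}{1-\bar p_{\mathcal{S}}(\tau_{\mathcal{S}})}\Big]\le J^{\mathcal{S}}(\pi)\le\mathbb{E}_{\tau_{\mathcal{S}}\sim p^\pi}\Big[\frac{\tilde J(\pi\mid\tau_{\mathcal{S}})}{\bar p_{\mathcal{S}}(\tau_{\mathcal{S}})}\Big].$$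
   Context: A finite-horizon POMDP $\mathcal{M}=(\mathcal{S},\mathcal{A},\mathcal{O},\mathbb{P},\mathbb{O},T,\mu)$ has finite state set ($S=|\mathcal{S}|$), action set, observation set ($O=|\mathcal{O}|$), transition kernel $\mathbb{P}$, observation kernel $\mathbb{O}$, horizon $T$, initial distribution $\mu$. Under a policy $\pi:\mathcal{I}\to\Delta(\mathcal{A})$: $s_1\sim\mu$, $o_t\sim\mathbb{O}(\cdot\mid s_t)$, and for $t<T$, $a_t\sim\pi(\cdot\mid i_t)$, $s_{t+1}\sim\mathbb{P}(\cdot\mid s_t,a_t)$, with $i_t$ a deterministic function of $(o_1,a_1,\dots,a_{t-1},o_t)$. Beliefs $\bm{b}_t\in\Delta(\mathcal{S})$ are deterministic functions of $(o_1,a_1,\dots,a_{t-1},o_t)$ (exact or approximate Bayesian beliefs), $\tau_{\mathcal{B}}=(\bm{b}_1,\dots,\bm{b}_T)$. $p^\pi$ is the law of the joint trajectory (state trajectory $\tau_{\mathcal{S}}=(s_1,\dots,s_T)$, observation trajectory $\tau_{\mathcal{O}}=(o_1,\dots,o_T)$, actions, beliefs), and $p^\pi(\cdot\mid\tau_{\mathcal{S}})$ denotes conditional laws given the state trajectory. A believed trajectory $\tau_{\tilde{\mathcal{S}}}=(\tilde s_1,\dots,\tilde s_T)\in\mathcal{S}^T$ is drawn given $\tau_{\mathcal{B}}$ with probability $p(\tau_{\tilde{\mathcal{S}}}\mid\tau_{\mathcal{B}})=\prod_t\bm{b}_t(\tilde s_t)$. For a sequence $x=(x_1,\dots,x_T)$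 over a finite set, $d(x)$ is its empirical distribution $d_y(x)=\frac1T\sum_t\mathbf{1}\{x_t=y\}$ and $H$ is Shannon entropy (natural log). *)

(* Defs.v *)
From HB Require Import structures.
From mathcomp Require Import all_boot all_order all_algebra.
From mathcomp Require Import reals exp.
Set Implicit Arguments. Unset Strict Implicit. Unset Printing Implicit Defensive.
Import Order.TTheory GRing.Theory Num.Theory.
Local Open Scope ring_scope.

Definition isdist (R : realType) (X : finType) (p : {ffun X -> R}) : Prop :=
  (forall x, 0 <= p x) /\ \sum_x p x = 1.

Definition entropy (R : realType) (X : finType) (p : X -> R) : R :=
  - \sum_(y : X) (if p y == 0 then 0 else p y * ln (p y)).

Section POMDP.
Variable R : realType.
Variables (S A Obs : finType) (I : Type).
(* horizon T = n.+1; times are indexed 0..n (paper: 1..T) *)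
Variable n : nat.
Local Notation T := n.+1.
Variable mu : {ffun S -> R}.
Variable Ptr : S -> A -> {ffun S -> R}.
Variable Ob : S -> {ffun Obs -> R}.
Variable info : seq Obs -> seq A -> I.       (* i_t = info (o_1..o_t) (a_1..a_{t-1}) *)
Variable pi : I -> {ffun A -> R}.
Variable bel : seq Obs -> seq A -> {ffun S -> R}. (* b_t = bel (o_1..o_t) (a_1..a_{t-1}) *)

Definition empirical (X : finType) (x : {ffun 'I_T -> X}) (y : X) : R :=
  #|[set t | x t == y]|%:R / T%:R.

Definition Hd (X : finType) (x : {ffun 'I_T -> X}) : R := entropy (empirical x).

Definition sidx (j : 'I_n) : 'I_T := widen_ord (leqnSn n) j.
Definition snext (j : 'I_n) : 'I_T := lift ord0 j.

Definition obs_hist (o : {ffun 'I_T -> Obs}) (t : nat) : seq Obs :=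
  take t.+1 [seq o i | i <- enum 'I_T].
Definition act_hist (a : {ffun 'I_n -> A}) (t : nat) : seq A :=
  take t [seq a j | j <- enum 'I_n].

Definition joint (s : {ffun 'I_T -> S}) (o : {ffun 'I_T -> Obs})
    (a : {ffun 'I_n -> A}) : R :=
  mu (s ord0) * (\prod_(t < T) Ob (s t) (o t)) *
  \prod_(j < n) (pi (info (obs_hist o j) (act_hist a j)) (a j)
                 * Ptr (s (sidx j)) (a j) (s (snext j))).

Definition pS (s : {ffun 'I_T -> S}) : R := \sum_o \sum_a joint s o a.

Definition pO_given (s : {ffun 'I_T -> S}) (o : {ffun 'I_T -> Obs}) : R :=
  (\sum_a joint s o a) / pS s.

Definition PT (s : {ffun 'I_T -> S}) : R :=
  \sum_(o | Hd s <= Hd o) pO_given s o.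

Definition JO (s : {ffun 'I_T -> S}) : R :=
  \sum_o pO_given s o * Hd o.

Definition belief_at (o : {ffun 'I_T -> Obs}) (a : {ffun 'I_n -> A})
    (t : 'I_T) : {ffun S -> R} := bel (obs_hist o t) (act_hist a t).

Definition believed_prob (o : {ffun 'I_T -> Obs}) (a : {ffun 'I_n -> A})
    (st : {ffun 'I_T -> S}) : R := \prod_(t < T) belief_at o a t (st t).

Definition pbar (s : {ffun 'I_T -> S}) : R :=
  \sum_o \sum_a (joint s o a / pS s) *
     \sum_(st | Hd s <= Hd st) believed_prob o a st.

Definition Jtilde (s : {ffun 'I_T -> S}) : R :=
  \sum_o \sum_a (joint s o a / pS s) *
     \sum_st believed_prob o a st * Hd st.

Definition JS : R := \sum_s pS s * Hd s.

End POMDP.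

(* Main.v *)
Require Import Defs.
From HB Require Import structures.
From mathcomp Require Import all_boot all_order all_algebra.
From mathcomp Require Import reals exp ring lra.
Import Order.TTheory GRing.Theory Num.Theory.
Local Open Scope ring_scope.
Lemma ent_bounds (R : realType) (X : finType) (p : X -> R) :
  (forall x, 0 <= p x) -> \sum_x p x = 1 ->
  0 <= entropy p <= ln #|X|%:R.
Proof.
move=> p0 p1.
have ple1 : forall x, p x <= 1.
  by move=> x; rewrite -p1 (bigD1 x) //= lerDl sumr_ge0.
have kpos : (0 < #|X|%:R :> R).
  case: (posnP #|X|) => [/card0_eq h|]; last by rewrite ltr0n.
  by move: p1; rewrite big_pred0 // => /eqP; rewrite eq_sym oner_eq0.
apply/andP; split.
  rewrite /entropy oppr_ge0 sumr_le0 // => y _.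
  case: ifP => // /negbT hy.
  by rewrite mulr_ge0_le0 // ln_le0.
set k := #|X|%:R : R.
have key : forall y, - (if p y == 0 then 0 else p y * ln (p y)) <= p y * ln k + k^-1 - p y.
  move=> y; case: eqP => [->|hy].
    by rewrite oppr0 mul0r add0r addr0 invr_ge0 ltW.
  have py : 0 < p y by rewrite lt0r p0 andbT; apply/eqP.
  have kp : 0 < k * p y by rewrite mulr_gt0.
  have := @le_ln1Dx R ((k * p y)^-1 - 1).
  rewrite (addrC 1) subrK lnV ?posrE // lnM ?posrE //.
  have -> : -1 < (k * p y)^-1 - 1 by have := invr_gt0 (k * p y); rewrite kp; lra.
  move=> /(_ isT) h.
  have := ler_wpM2l (ltW py) h.
  have e : p y * (k * p y)^-1 = k^-1.
    by rewrite invfM mulrC -mulrA mulVf ?mulr1 // gt_eqF.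
  rewrite mulrBr mulr1 e => h2; lra.
rewrite /entropy -sumrN.
apply: le_trans (ler_sum _ (fun y _ => key y)) _.
rewrite sumrB big_split /= -mulr_suml p1 mul1r sumr_const.
rewrite -[k^-1 *+ _]mulr_natl -/k mulfV ?gt_eqF //; lra.
Qed.
Lemma emp_sum (R : realType) (n : nat) (X : finType) (x : {ffun 'I_n.+1 -> X}) :
  \sum_y @empirical R n X x y = 1.
Proof.
rewrite /empirical -mulr_suml.
have -> : \sum_y (#|[set t | x t == y]|%:R : R) = n.+1%:R.
  rewrite -natr_sum; congr (_%:R).
  apply: etrans _ (card_ord n.+1); rewrite -sum1_card (partition_big x predT) //=.
  apply: eq_bigr => y _; rewrite -sum1_card; apply: eq_bigl => t.
  by rewrite inE.
by rewrite mulfV // pnatr_eq0.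
Qed.

Lemma split_bounds (R : realType) (U : finType) (q h : U -> R) (c L : R) :
  (forall u, 0 <= q u) -> \sum_u q u = 1 -> (forall u, 0 <= h u <= L) -> 0 <= c ->
  (\sum_(u | c <= h u) q u) * c <= \sum_u q u * h u /\
  \sum_u q u * h u <= (\sum_(u | c <= h u) q u) * L + (1 - \sum_(u | c <= h u) q u) * c.
Proof.
move=> q0 q1 hb c0.
have e1 : 1 - \sum_(u | c <= h u) q u = \sum_(u | ~~ (c <= h u)) q u.
  by rewrite -q1 (bigID (fun u => c <= h u)) /= addrC addrK.
rewrite e1 (bigID (fun u => c <= h u) predT (fun u => q u * h u)) /= !mulr_suml; split.
  rewrite -[X in X <= _]addr0; apply: lerD.
    by apply: ler_sum => u hu; apply: ler_wpM2l.
  apply: sumr_ge0 => u _; apply: mulr_ge0 => //; by case/andP: (hb u).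
apply: lerD; apply: ler_sum => u hu; apply: ler_wpM2l => //.
  by case/andP: (hb u).
by apply: ltW; rewrite ltNge.
Qed.

Lemma Hd_bounds {R : realType} {n : nat} {X : finType} (x : {ffun 'I_n.+1 -> X}) :
  0 <= Hd R x <= ln #|X|%:R.
Proof.
apply: ent_bounds; last exact: emp_sum.
by move=> y; rewrite /empirical divr_ge0.
Qed.

Section Main.
Lemma joint_ge0 (R : realType) (S A Obs : finType) (I : Type) (n : nat)
    (mu : {ffun S -> R}) (Ptr : S -> A -> {ffun S -> R})
    (Ob : S -> {ffun Obs -> R}) (info : seq Obs -> seq A -> I)
    (pi : I -> {ffun A -> R}) :
  isdist mu -> (forall s a, isdist (Ptr s a)) -> (forall s, isdist (Ob s)) ->
  (forall i, isdist (pi i)) ->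
  forall s o a, 0 <= joint mu Ptr Ob info pi (n:=n) s o a.
Proof.
move=> [m0 _] hP hO hpi s o a; rewrite /joint.
apply: mulr_ge0; first apply: mulr_ge0 => //.
  by apply: prodr_ge0 => t _; case: (hO (s t)).
apply: prodr_ge0 => j _; apply: mulr_ge0.
  by case: (hpi (info (obs_hist o j) (act_hist a j))).
by case: (hP (s (sidx j)) (a j)).
Qed.

Lemma bp_sum (R : realType) (S A Obs : finType) (n : nat)
    (bel : seq Obs -> seq A -> {ffun S -> R}) :
  (forall os as_, isdist (bel os as_)) ->
  forall o a, (forall st, 0 <= believed_prob bel (n:=n) o a st) /\
    \sum_st believed_prob bel (n:=n) o a st = 1.
Proof.
move=> hb o a; split.
  move=> st; apply: prodr_ge0 => t _; rewrite /belief_at.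
  by case: (hb (obs_hist o t) (act_hist a t)).
rewrite /believed_prob -(bigA_distr_bigA (fun t x => belief_at bel o a t x)).
rewrite big1 // => t _; rewrite /belief_at.
by case: (hb (obs_hist o t) (act_hist a t)).
Qed.
End Main.

Lemma combo (R : realType) (U V : finType) (w P : U -> V -> R) (L c : R) :
  \sum_u \sum_v w u v = 1 ->
  \sum_u \sum_v w u v * (P u v * L + (1 - P u v) * c) =
  (\sum_u \sum_v w u v * P u v) * L + (1 - \sum_u \sum_v w u v * P u v) * c.
Proof.
move=> W1.
transitivity (\sum_u \sum_v (w u v * P u v * (L - c) + w u v * c)).
  by apply: eq_bigr => o _; apply: eq_bigr => a _; ring.
under eq_bigr do rewrite big_split /= -!mulr_suml.
rewrite big_split /= -!mulr_suml W1; ring.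
Qed.

Lemma per_s (R : realType) (S A Obs : finType) (I : Type) (n : nat)
    (mu : {ffun S -> R}) (Ptr : S -> A -> {ffun S -> R})
    (Ob : S -> {ffun Obs -> R}) (info : seq Obs -> seq A -> I)
    (pi : I -> {ffun A -> R}) (bel : seq Obs -> seq A -> {ffun S -> R}) :
  isdist mu -> (forall s a, isdist (Ptr s a)) -> (forall s, isdist (Ob s)) ->
  (forall i, isdist (pi i)) -> (forall os as_, isdist (bel os as_)) ->
  forall s : {ffun 'I_n.+1 -> S}, 0 < pS mu Ptr Ob info pi s ->
  (PT mu Ptr Ob info pi s * Hd R s <= JO mu Ptr Ob info pi s /\
   JO mu Ptr Ob info pi s <= PT mu Ptr Ob info pi s * ln #|Obs|%:R
        + (1 - PT mu Ptr Ob info pi s) * Hd R s) /\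
  (pbar mu Ptr Ob info pi bel s * Hd R s <= Jtilde mu Ptr Ob info pi bel s /\
   Jtilde mu Ptr Ob info pi bel s <= pbar mu Ptr Ob info pi bel s * ln #|S|%:R
        + (1 - pbar mu Ptr Ob info pi bel s) * Hd R s).
Proof.
move=> hmu hP hO hpi hb s ps.
have j0 := @joint_ge0 R S A Obs I n mu Ptr Ob info pi hmu hP hO hpi.
have c0 : 0 <= Hd R s by case/andP: (Hd_bounds (R:=R) s).
split.
  apply: split_bounds => //.
  - move=> o; rewrite /pO_given divr_ge0 ?(ltW ps) // sumr_ge0 // => a _; exact: j0.
  - by rewrite /pO_given -mulr_suml mulfV // gt_eqF.
  - by move=> o; apply: Hd_bounds.
set w := fun o a => joint mu Ptr Ob info pi s o a / pS mu Ptr Ob info pi s.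
have w0 : forall o a, 0 <= w o a by move=> o a; rewrite /w divr_ge0 // ltW.
have W1 : \sum_o \sum_a w o a = 1.
  rewrite /w; under eq_bigr do rewrite -mulr_suml.
  by rewrite -mulr_suml mulfV // gt_eqF.
have inner := fun (o : {ffun 'I_n.+1 -> Obs}) (a : {ffun 'I_n -> A}) => @split_bounds R _ (believed_prob bel o a) (fun st => Hd R st)
   (Hd R s) (ln #|S|%:R) (proj1 (@bp_sum R S A Obs n bel hb o a)) (proj2 (@bp_sum R S A Obs n bel hb o a))
   (fun st => Hd_bounds (R:=R) st) c0.
pose Pin := fun o a => \sum_(st | Hd R s <= Hd R st) believed_prob bel o a st.
rewrite /pbar /Jtilde; split.
  rewrite mulr_suml; apply: ler_sum => o _; rewrite mulr_suml; apply: ler_sum => a _.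
  rewrite -mulrA; apply: ler_wpM2l; [exact: w0 | exact: (proj1 (inner o a))].
apply: le_trans.
  apply: ler_sum => o _; apply: ler_sum => a _.
  apply: ler_wpM2l; [exact: w0 | exact: (proj2 (inner o a))].
rewrite le_eqVlt; apply/orP; left; apply/eqP.
exact (@combo R _ _ w (Pin n) (ln #|S|%:R) (Hd R s) W1).
Qed.

Lemma div_lo (R : realType) (J P L c : R) : 0 < P < 1 -> J <= P * L + (1 - P) * c ->
  (J - P * L) / (1 - P) <= c.
Proof. move=> /andP[h0 h1] h; rewrite ler_pdivrMr ?subr_gt0 //; lra. Qed.
Lemma div_up (R : realType) (J P c : R) : 0 < P -> P * c <= J -> c <= J / P.
Proof. move=> h0 h; rewrite ler_pdivlMr //; lra. Qed.

Theorem theorem4 (R : realType) (S A Obs : finType) (I : Type) (n : nat)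
    (mu : {ffun S -> R}) (Ptr : S -> A -> {ffun S -> R})
    (Ob : S -> {ffun Obs -> R}) (info : seq Obs -> seq A -> I)
    (pi : I -> {ffun A -> R}) (bel : seq Obs -> seq A -> {ffun S -> R}) :
  isdist mu ->
  (forall s a, isdist (Ptr s a)) ->
  (forall s, isdist (Ob s)) ->
  (forall i, isdist (pi i)) ->
  (forall os as_, isdist (bel os as_)) ->
  (forall s : {ffun 'I_n.+1 -> S},
     0 < @pS R S A Obs I n mu Ptr Ob info pi s ->
     (0 < @PT R S A Obs I n mu Ptr Ob info pi s < 1) /\ (0 < @pbar R S A Obs I n mu Ptr Ob info pi bel s < 1)) ->
  let pS := @pS R S A Obs I n mu Ptr Ob info pi in
  let PT := @PT R S A Obs I n mu Ptr Ob info pi in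
  let JO := @JO R S A Obs I n mu Ptr Ob info pi in
  let pbar := @pbar R S A Obs I n mu Ptr Ob info pi bel in
  let Jt := @Jtilde R S A Obs I n mu Ptr Ob info pi bel in
  let JS := @JS R S A Obs I n mu Ptr Ob info pi in
  ((\sum_(s | 0 < pS s) pS s * ((JO s - PT s * ln #|Obs|%:R) / (1 - PT s))
      <= JS)
   /\ (JS <= \sum_(s | 0 < pS s) pS s * (JO s / PT s)))
  /\
  ((\sum_(s | 0 < pS s) pS s * ((Jt s - pbar s * ln #|S|%:R) / (1 - pbar s))
      <= JS)
   /\ (JS <= \sum_(s | 0 < pS s) pS s * (Jt s / pbar s))).
Proof.
move=> hmu hP hO hpi hb hyp pS0 PT0 JO0 pbar0 Jt0 JS0.
have j0 := @joint_ge0 R S A Obs I n mu Ptr Ob info pi hmu hP hO hpi.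
have pS_ge0 : forall s, 0 <= pS0 s.
  by move=> s; rewrite /pS0 /pS; apply: sumr_ge0 => o _; apply: sumr_ge0.
have EJS : JS0 = \sum_(s | 0 < pS0 s) pS0 s * Hd R s.
  rewrite /JS0 /JS [LHS](bigID (fun s => 0 < pS0 s)) /= [X in _ + X = _]big1 ?addr0 // => s hs.
  move: hs (pS_ge0 s); rewrite /pS0 -leNgt => h1 h2.
  have e : pS mu Ptr Ob info pi s = 0 by apply: le_anti; rewrite h1 h2.
  by rewrite e mul0r.

have ps := @per_s R S A Obs I n mu Ptr Ob info pi bel hmu hP hO hpi hb.
rewrite EJS; split; split; apply: ler_sum => s hs; apply: ler_wpM2l;
  try exact: pS_ge0; have [[h1 h2] [h3 h4]] := ps s hs; have [k1 k2] := hyp s hs.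
- exact: div_lo.
- by apply: div_up => //; case/andP: k1.
- exact: div_lo.
- by apply: div_up => //; case/andP: k2.
Qed.
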